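(* Let $K\ge 3$, let $m_1<m_2<\cdots<m_K$ be pairwise co-prime positive integers with $m_1\ge 3$, let $M$ be a positive integer, and set $M_k=Mm_k$ for $k=1,\ldots,K$. Then $$D_2(M_1,\ldots,M_K)=Md,\qquad\text{where}\qquad d=\min_{I\subseteq\{1,\ldots,K\}}\Big\{\prod_{i\in I}m_i+\prod_{i\in\overline I}m_i\Big\},$$ with $\overline I=\{1,\ldots,K\}\setminus I$ and the empty product equal to $1$.
   Context: For a positive integer $n$ and an integer $x$, $\langle x\rangle_n$ denotes the remainder of $x$ modulo $n$, in $\{0,\ldots,n-1\}$, and $\mathbb Z_n=\{0,1,\ldots,n-1\}$. An $L$-set is a set with exactly $L$ elements. For a finite set $\mathcal A$ of nonnegative integers and a modulus $n_k$, the residue set is $R_k(\mathcal A)=\{\langle a\rangle_{n_k}: a\in\mathcal A\}$ (an unordered set, so repetitions collapse). For a modulus set $\mathcal N=\{n_1,\ldots,n_K\}$, the dynamic range $D_L(\mathcal N)=D_L(n_1,\ldots,n_K)$ is the minimal positive integer $D$ such that there exist two different $L$-sets $\mathcal A,\mathcal B\subseteq\mathbb Z_{D+1}$ with $R_k(\mathcal A)=R_k(\mathcal B)$ for every $k=1,\ldots,K$ (residues taken modulo $n_k$). *)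

(* Defs.v *)
From mathcomp Require Import all_boot.
Set Implicit Arguments. Unset Strict Implicit. Unset Printing Implicit Defensive.

Definition residues (D : nat) (n : nat) (A : {set 'I_D.+1}) : seq nat :=
  [seq (val a) %% n | a in A].

Definition ambiguous (L K : nat) (n : 'I_K -> nat) (D : nat) : Prop :=
  exists A B : {set 'I_D.+1},
    [/\ #|A| = L, #|B| = L, A != B &
        forall k : 'I_K, residues (n k) A =i residues (n k) B].

Definition is_dynamic_range (L K : nat) (n : 'I_K -> nat) (D : nat) : Prop :=
  [/\ 0 < D, ambiguous L n D &
      forall D', 0 < D' -> ambiguous L n D' -> D <= D'].

Definition split_val (K : nat) (m : 'I_K -> nat) (I : {set 'I_K}) : nat :=
  \prod_(i in I) m i + \prod_(i in ~: I) m i.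

Definition dmin (K : nat) (m : 'I_K -> nat) : nat :=
  split_val m [arg min_(I < set0) split_val m I].

(* Main.v *)
Require Import Defs.
From mathcomp Require Import all_boot.
From mathcomp Require Import zify.

Lemma mem_res2 D n (u v : 'I_D.+1) z :
  (z \in residues n [set u; v]) = (z == u %% n) || (z == v %% n).
Proof.
rewrite /residues; apply/mapP/orP => [[w]|].
  by rewrite mem_enum in_set2 => /orP[]/eqP -> ->; [left|right].
by case=> /eqP ->; [exists u | exists v]; rewrite // mem_enum in_set2 eqxx ?orbT.
Qed.

Lemma pair_cases (ra1 ra2 rb1 rb2 : nat) :
  (ra1 == rb1) || (ra1 == rb2) -> (ra2 == rb1) || (ra2 == rb2) ->
  (rb1 == ra1) || (rb1 == ra2) -> (rb2 == ra1) || (rb2 == ra2) ->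
  (ra1 = rb1 /\ ra2 = rb2) \/ (ra1 = rb2 /\ ra2 = rb1).
Proof.
by move=> /orP[]/eqP h1 /orP[]/eqP h2 /orP[]/eqP h3 /orP[]/eqP h4; lia.
Qed.

Lemma cong_far n x y : x = y %[mod n] -> x <> y -> n + x <= y \/ n + y <= x.
Proof.
move=> H ne; have [h|h] := leqP x y.
  left; have hd : n %| y - x by rewrite -eqn_mod_dvd // H.
  have := dvdn_leq _ hd; lia.
right; have h' : y <= x by lia.
have hd : n %| x - y by rewrite -eqn_mod_dvd // H.
have := dvdn_leq _ hd; lia.
Qed.

Lemma cong_dvd d n x y : d %| n -> x = y %[mod n] -> x = y %[mod d].
Proof. by move=> h H; rewrite -(modn_dvdm x h) -(modn_dvdm y h) H. Qed.

Lemma cong_mul M a b x y : coprime a b ->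
  x = y %[mod M * a] -> x = y %[mod M * b] -> x = y %[mod M * (a * b)].
Proof.
move=> cab.
wlog hxy : x y / y <= x.
  move=> W; have [h|h] := leqP y x; first exact: W.
  by move=> h1 h2; apply/esym/W; [lia| apply/esym | apply/esym].
move=> /eqP ha /eqP hb; apply/eqP.
rewrite eqn_mod_dvd // in ha; rewrite eqn_mod_dvd // in hb; rewrite eqn_mod_dvd //.
have -> : M * (a * b) = lcmn (M * a) (M * b).
  rewrite -muln_lcmr; congr (_ * _).
  by have := muln_lcm_gcd a b; rewrite (eqP cab) muln1.
by rewrite dvdn_lcm ha hb.
Qed.

Section P.
Variables (K : nat) (m : 'I_K -> nat).
Hypothesis cop : forall i j : 'I_K, i != j -> coprime (m i) (m j).

Lemma coprime_prod_seq a (s : seq 'I_K) :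
  (forall j, j \in s -> coprime a (m j)) -> coprime a (\prod_(j <- s) m j).
Proof.
elim: s => [|j s IH] h; first by rewrite big_nil coprimen1.
rewrite big_cons coprimeMr h ?mem_head //= IH // => i hi.
by apply: h; rewrite in_cons hi orbT.
Qed.

Lemma coprime_prod_set a (S : {set 'I_K}) :
  (forall j, j \in S -> coprime a (m j)) -> coprime a (\prod_(j in S) m j).
Proof.
move=> h; rewrite -big_enum; apply: coprime_prod_seq => j.
by rewrite mem_enum; apply: h.
Qed.

Lemma cong_prod_seq M x y (s : seq 'I_K) : uniq s -> x = y %[mod M] ->
  (forall k, k \in s -> x = y %[mod M * m k]) ->
  x = y %[mod M * \prod_(k <- s) m k].
Proof.
elim: s => [|k s IH] /=; first by rewrite big_nil muln1.
case/andP => ks us h0 h; rewrite big_cons.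
apply: cong_mul; first apply: coprime_prod_seq.
- move=> j js; apply: cop; apply/eqP => e; move: ks; by rewrite e js.
- by apply: h; rewrite mem_head.
- apply: IH => // i hi; apply: h; by rewrite in_cons hi orbT.
Qed.

Lemma cong_prod_set M x y (S : {set 'I_K}) : x = y %[mod M] ->
  (forall k, k \in S -> x = y %[mod M * m k]) ->
  x = y %[mod M * \prod_(k in S) m k].
Proof.
move=> h0 h; rewrite -big_enum; apply: cong_prod_seq => //.
  exact: enum_uniq.
by move=> k; rewrite mem_enum; apply: h.
Qed.
End P.

Lemma dmin_le K (m : 'I_K -> nat) S : dmin m <= split_val m S.
Proof. rewrite /dmin; case: arg_minnP => // I _ hI; exact: hI. Qed.

Lemma prod_split K (m : 'I_K -> nat) (S : {set 'I_K}) :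
  \prod_(i in [set: 'I_K]) m i = \prod_(i in S) m i * \prod_(i in ~: S) m i.
Proof. by rewrite (big_setID S) setTI setTD. Qed.
Arguments cong_dvd {d n x y}.
Arguments cong_far {n x y}.

Section Q.
Variables (K : nat) (m : 'I_K -> nat) (M : nat).
Hypothesis K3 : 3 <= K.
Hypothesis mono : forall i j : 'I_K, i < j -> m i < m j.
Hypothesis cop : forall i j : 'I_K, i != j -> coprime (m i) (m j).
Hypothesis m0 : forall i : 'I_K, val i = 0 -> 3 <= m i.
Hypothesis Mpos : 0 < M.

Let o : 'I_K := Ordinal (leq_trans (isT : 0 < 3) K3).

Lemma m_ge3 i : 3 <= m i.
Proof.
case: (posnP (val i)) => h; first exact: m0.
have := @mono o i h; have := @m0 o erefl; lia.
Qed.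

Lemma T_ge : 2 * dmin m <= \prod_(i in [set: 'I_K]) m i.
Proof.
have hd := @dmin_le _ m [set o]; rewrite /split_val big_set1 in hd.
rewrite (@prod_split _ m [set o]) big_set1.
set Q := \prod_(i in ~: [set o]) m i in hd *.
have hQ : 9 <= Q.
  have : \prod_(i in ~: [set o]) 3 <= Q by apply: leq_prod => i _; exact: m_ge3.
  rewrite prod_nat_const; apply: leq_trans.
  have hc : #|~: [set o]| = K.-1.
    by have := cardsC [set o]; rewrite cards1 card_ord; lia.
  rewrite hc; have -> : K.-1 = (K.-1 - 2) + 2 by lia.
  by rewrite expnD leq_pmull // expn_gt0.
have := m_ge3 o; nia.
Qed.

Lemma lower (a1 a2 b1 b2 D : nat) : a1 <= D -> a2 <= D -> b1 <= D -> b2 <= D ->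
  ~ (a1 = b1 /\ a2 = b2) -> ~ (a1 = b2 /\ a2 = b1) ->
  (forall k, (a1 = b1 %[mod M * m k] /\ a2 = b2 %[mod M * m k]) \/
             (a1 = b2 %[mod M * m k] /\ a2 = b1 %[mod M * m k])) ->
  M * dmin m <= D.
Proof.
move=> h1 h2 h3 h4 n1 n2 hk.
set T := \prod_(i in [set: 'I_K]) m i.
have hT : 2 * (M * dmin m) <= M * T.
  by rewrite mulnCA leq_mul2l T_ge orbT.
have call x y : (forall k, x = y %[mod M * m k]) -> x = y %[mod M * T].
  move=> h; rewrite /T; apply: (@cong_prod_set _ _ cop); last by move=> k _; exact: h.
  exact: (cong_dvd (dvdn_mulr _ (dvdnn M)) (h o)).
have [hs|hs] := eqVneq (a1 + a2) (b1 + b2); last first.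
  have : a1 + a2 = b1 + b2 %[mod M * T].
    apply: call => k; case: (hk k) => -[e1 e2];
    by rewrite -modnDm e1 e2 modnDm // addnC.
  move/cong_far => /(_ (elimN eqP hs)); lia.
have ne1 : a1 <> b1 by lia.
have ne2 : a1 <> b2 by lia.
set S := [set k | (a1 %% (M * m k) == b1 %% (M * m k)) &&
                  (a2 %% (M * m k) == b2 %% (M * m k))].
have inS k : k \in S -> a1 = b1 %[mod M * m k].
  by rewrite inE => /andP[/eqP].
have notS k : k \notin S -> a1 = b2 %[mod M * m k].
  rewrite inE; case: (hk k) => -[e1 e2]; first by rewrite e1 e2 !eqxx.
  by [].
case: (set_0Vmem S) => [S0 | [k1 k1S]].
  have : a1 = b2 %[mod M * T].
    by apply: call => k; apply: notS; rewrite S0 in_set0.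
  move/cong_far => /(_ ne2); lia.
case: (set_0Vmem (~: S)) => [S1 | [k2 k2S]].
  have : a1 = b1 %[mod M * T].
    by apply: call => k; apply: inS; rewrite -[k \in S]negbK -in_setC S1 in_set0.
  move/cong_far => /(_ ne1); lia.
have c1 : a1 = b1 %[mod M * \prod_(k in S) m k].
  apply: (@cong_prod_set _ _ cop); first exact: (cong_dvd (dvdn_mulr _ (dvdnn M)) (inS _ k1S)).
  exact: inS.
rewrite in_setC in k2S.
have c2 : a1 = b2 %[mod M * \prod_(k in ~: S) m k].
  apply: (@cong_prod_set _ _ cop); first exact: (cong_dvd (dvdn_mulr _ (dvdnn M)) (notS _ k2S)).
  by move=> k; rewrite in_setC; apply: notS.
have hd : M * dmin m <= M * \prod_(k in S) m k + M * \prod_(k in ~: S) m k.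
  by rewrite -mulnDr leq_mul2l dmin_le orbT.
move: c1 c2 => /cong_far /(_ ne1) c1 /cong_far /(_ ne2) c2; lia.
Qed.
End Q.

Theorem theorem1 (K : nat) (m : 'I_K -> nat) (M : nat) :
  3 <= K ->
  (forall i : 'I_K, 0 < m i) ->
  (forall i j : 'I_K, i < j -> m i < m j) ->
  (forall i j : 'I_K, i != j -> coprime (m i) (m j)) ->
  (forall i : 'I_K, val i = 0 -> 3 <= m i) ->
  0 < M ->
  is_dynamic_range 2 (fun k => M * m k) (M * dmin m).
Proof.
move=> K3 mpos mono cop m0 Mpos.
set I := [arg min_(I < set0) split_val m I].
set P := \prod_(i in I) m i.
set Q := \prod_(i in ~: I) m i.
have hd : dmin m = P + Q by [].
have Pp : 0 < P by apply: prodn_gt0.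
have Qp : 0 < Q by apply: prodn_gt0.
split.
- by rewrite hd muln_gt0 Mpos addn_gt0 Pp.
- rewrite hd.
  pose o : 'I_K := Ordinal (leq_trans (isT : 0 < 3) K3).
  have PQ : P != Q.
    have dv (S : {set 'I_K}) k : k \in S -> m k %| \prod_(i in S) m i.
      by move=> kS; rewrite (big_setD1 k kS) dvdn_mulr.
    have co (S : {set 'I_K}) k : k \notin S -> coprime (m k) (\prod_(i in S) m i).
      move=> kS; apply: (@coprime_prod_set _ m) => j jS; apply: cop.
      by apply/eqP=> e; move: kS; rewrite e jS.
    have h3 := @m_ge3 K m M K3 mono m0 Mpos o.
    apply/eqP=> e; case: (boolP (o \in I)) => oI.
      have d1 := dv _ _ oI; rewrite -/P e in d1.
      have c1 : o \notin ~: I by rewrite in_setC oI.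
      have := coprime_dvdr d1 (co _ _ c1).
      by rewrite /coprime gcdnn => /eqP; lia.
    have c1 : o \in ~: I by rewrite in_setC.
    have d1 := dv _ _ c1; rewrite -/Q -e in d1.
    have := coprime_dvdr d1 (co _ _ oI).
    by rewrite /coprime gcdnn => /eqP; lia.
  pose N := (M * (P + Q)).
  have hPle : M * P <= N by rewrite /N mulnDr leq_addr.
  have hQle : M * Q <= N by rewrite /N mulnDr leq_addl.
  exists [set inord 0; inord N], [set inord (M * P); inord (M * Q)].
  have hN : 0 < N by rewrite /N muln_gt0 Mpos addn_gt0 Pp.
  split.
  + rewrite cards2 (_ : (_ != _) = true) //; apply/eqP => /(congr1 (@nat_of_ord _)).
    by rewrite !inordK //; lia.
  + rewrite cards2 (_ : (_ != _) = true) //; apply/eqP => /(congr1 (@nat_of_ord _)).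
    rewrite !inordK ?ltnS //; move/eqP; rewrite eqn_mul2l => /orP[]; lia.
  + apply/negP => /eqP e.
    have : (inord 0 : 'I_N.+1) \in [set inord (M * P); inord (M * Q)].
      by rewrite -e in_set2 eqxx.
    rewrite in_set2 => /orP[]/eqP/(congr1 (@nat_of_ord _)); rewrite !inordK ?ltnS //;
      have := leq_mul Mpos Pp; have := leq_mul Mpos Qp; lia.
  + move=> k z; rewrite !mem_res2 !inordK ?ltnS //.
    have dvk (S : {set 'I_K}) : k \in S -> M * m k %| M * \prod_(i in S) m i.
      by move=> kS; rewrite dvdn_pmul2l // (big_setD1 k kS) dvdn_mulr.
    rewrite /N mulnDr mod0n.
    case: (boolP (k \in I)) => kI.
      have d := dvk _ kI; rewrite -/P in d.
      rewrite -{1}(divnK d) modnMDl.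
      by move/eqP: d => ->.
    have kI' : k \in ~: I by rewrite in_setC.
    have d := dvk _ kI'; rewrite -/Q in d.
    rewrite addnC -{1}(divnK d) modnMDl.
    by move/eqP: d => ->; rewrite orbC.
- move=> D' _ [A [B [cA cB AB hres]]].
  have/cards2P [a1 [a2 [ne12 eA]]] : #|A| == 2 by rewrite cA.
  have/cards2P [b1 [b2 [ne12' eB]]] : #|B| == 2 by rewrite cB.
  apply: (@lower K m M K3 mono cop m0 Mpos (val a1) (val a2) (val b1) (val b2)).
  + exact: leq_ord.
  + exact: leq_ord.
  + exact: leq_ord.
  + exact: leq_ord.
  + move=> [e1 e2]; move/val_inj: e1 => e1; move/val_inj: e2 => e2.
    by move: AB; rewrite eA eB e1 e2 eqxx.
  + move=> [e1 e2]; move/val_inj: e1 => e1; move/val_inj: e2 => e2.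
    move: AB; rewrite eA eB e1 e2 => /negP; apply; apply/eqP/setP => z.
    by rewrite !in_set2 orbC.
  + move=> k; have h := hres k; rewrite eA eB in h.
    apply: pair_cases.
    * by rewrite -mem_res2 -h mem_res2 eqxx.
    * by rewrite -mem_res2 -h mem_res2 eqxx orbT.
    * by rewrite -mem_res2 h mem_res2 eqxx.
    * by rewrite -mem_res2 h mem_res2 eqxx orbT.
Qed.
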